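(* Let $S$ be a semigroup and $\emptyset\neq E\subseteq E(S)$. Then the partial operation $\circ$ on $C_E(S)$ is well defined (i.e. if $(e,s),(f,t)\in C_E(S)$ and $sf=s$ then $(e,st)\in C_E(S)$), and $P=(C_E(S),\circ,D)$ is a constellation whose set of right identities is $D(P)=\{(e,e)\mid e\in E\}$. Moreover, for $(e,s),(f,t)\in C_E(S)$, $(e,s)\le(f,t)$ in the natural quasiorder of $P$ if and only if $ef=e$ and $s=et$. If in addition $S$ is an $E$-demigroup, then $C^d_E(S)$ is a subconstellation of $C_E(S)$.
   Context: For a semigroup $S$, $E(S)$ denotes its set of idempotents. For $\emptyset\neq E\subseteq E(S)$, $C_E(S)=\{(e,s)\in E\times S\mid es=s\}$, with partial binary operation $(e,s)\circ(f,t)=(e,st)$, defined exactly when $sf=s$, and unary operation $D((e,s))=(e,e)$. A demigroup is a semigroup $S$ with a unary operation $d$ such that for all $x,y\in S$: $d(x)\in E(S)$, $d(x)x=x$ and $d(xy)=d(xd(y))$. For $E\subseteq E(S)$, a demigroup $S$ is an $E$-demigroup if $d(s)\in E$ for all $s\in S$ and $ed(e)=e$ for all $e\in E$. For an $E$-demigroup, $C^d_E(S)=\{(e,s)\in C_E(S)\mid d(e)=d(s)\}$ with the restricted operations. A constellation is a set $P$ with a partial binary operation $\circ$ and a unary operation $D$ such that for all $x,y,z\in P$: (C1) if $x\circ(y\circ z)$ exists then so does $(x\circ y)\circ z$, and they are equal; (C2) if $x\circ y$ and $y\circ z$ exist then $x\circ(y\circ z)$ exists; (C3) $D(x)$ is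 the unique right identity $e$ with $e\circ x=x$, where $e$ is a right identity if $a\circ e=a$ whenever $a\circ e$ exists. $D(P)=\{D(x)\mid x\in P\}$. The natural quasiorder on $P$ is: $s\le t$ iff $D(s)\circ t$ exists and equals $s$. A subset $Q\subseteq P$ is a subconstellation if $D(s)\in Q$ for all $s\in Q$, and $s\circ t\in Q$ whenever $s,t\in Q$ and $s\circ t$ exists in $P$. *)

(* Defs.v *)
Set Implicit Arguments.

Section Defs.
Variable T : Type.
Variable mul : T -> T -> T.

Definition associative_op : Prop :=
  forall x y z : T, mul x (mul y z) = mul (mul x y) z.

Definition idempotent (e : T) : Prop := mul e e = e.

Definition CE (E : T -> Prop) (p : T * T) : Prop :=
  E (fst p) /\ mul (fst p) (snd p) = snd p.

Definition CE_defined (p q : T * T) : Prop := mul (snd p) (fst q) = snd p.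
Definition CE_comp (p q : T * T) : T * T := (fst p, mul (snd p) (snd q)).
Definition CE_D (p : T * T) : T * T := (fst p, fst p).

Definition demigroup (d : T -> T) : Prop :=
  forall x y : T,
    idempotent (d x) /\ mul (d x) x = x /\ d (mul x y) = d (mul x (d y)).

Definition E_demigroup (E : T -> Prop) (d : T -> T) : Prop :=
  demigroup d /\ (forall s, E (d s)) /\ (forall e, E e -> mul e (d e) = e).

Definition CdE (E : T -> Prop) (d : T -> T) (p : T * T) : Prop :=
  CE E p /\ d (fst p) = d (snd p).
End Defs.

(* Constellations: carrier P (a predicate on a type X), a partial binary
   operation given by its domain of definition [def] and its value [comp]
   (meaningful only where [def] holds), and a unary operation [D]. *)
Section Constellation.
Variable X : Type.
Variables (P : X -> Prop) (def : X -> X -> Prop) (comp : X -> X -> X) (D : X -> X).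

Definition right_identity (e : X) : Prop :=
  P e /\ forall a, P a -> def a e -> comp a e = a.

Definition is_constellation : Prop :=
  (forall x y, P x -> P y -> def x y -> P (comp x y)) /\
  (forall x, P x -> P (D x)) /\
  (forall x y z, P x -> P y -> P z ->
     def y z -> def x (comp y z) ->
     def x y /\ def (comp x y) z /\ comp (comp x y) z = comp x (comp y z)) /\
  (forall x y z, P x -> P y -> P z ->
     def x y -> def y z -> def x (comp y z)) /\
  (forall x, P x ->
     right_identity (D x) /\ def (D x) x /\ comp (D x) x = x /\
     (forall e, right_identity e -> def e x -> comp e x = x -> e = D x)).

Definition D_image (p : X) : Prop := exists x, P x /\ D x = p.

Definition nat_le (s t : X) : Prop := def (D s) t /\ comp (D s) t = s.

Definition subconstellation (Q : X -> Prop) : Prop :=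
  (forall s, Q s -> P s) /\
  (forall s, Q s -> Q (D s)) /\
  (forall s t, Q s -> Q t -> def s t -> Q (comp s t)).
End Constellation.

(* Main.v *)
Require Import Defs.

Theorem proposition3p1 (T : Type) (mul : T -> T -> T)
  (Hassoc : associative_op mul)
  (E : T -> Prop) (HEne : exists e, E e) (HEid : forall e, E e -> idempotent mul e) :
  (* well-definedness of the partial operation *)
  (forall e s f t, CE mul E (e, s) -> CE mul E (f, t) -> mul s f = s ->
     CE mul E (e, mul s t)) /\
  (* C_E(S) is a constellation *)
  is_constellation (CE mul E) (CE_defined mul) (CE_comp mul) (@CE_D T) /\
  (* its right identities are exactly the (e,e), e in E *)
  (forall p, right_identity (CE mul E) (CE_defined mul) (CE_comp mul) p <->
             exists e, E e /\ p = (e, e)) /\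
  (* D(P) = {(e,e) | e in E} *)
  (forall p, D_image (CE mul E) (@CE_D T) p <-> exists e, E e /\ p = (e, e)) /\
  (* description of the natural quasiorder *)
  (forall e s f t, CE mul E (e, s) -> CE mul E (f, t) ->
     (nat_le (CE_defined mul) (CE_comp mul) (@CE_D T) (e, s) (f, t) <->
      mul e f = e /\ s = mul e t)) /\
  (* C^d_E(S) is a subconstellation when S is an E-demigroup *)
  (forall d : T -> T, E_demigroup mul E d ->
     subconstellation (CE mul E) (CE_defined mul) (CE_comp mul) (@CE_D T)
       (CdE mul E d)).
Proof.
  unfold associative_op in Hassoc.
  assert (WD : forall e s f t, CE mul E (e, s) -> CE mul E (f, t) -> mul s f = s ->
     CE mul E (e, mul s t)).
  { intros e s f t [H1 H2] _ H3; split; simpl in *; auto.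
    rewrite Hassoc, H2; reflexivity. }
  assert (RI : forall p, right_identity (CE mul E) (CE_defined mul) (CE_comp mul) p <->
             exists e, E e /\ p = (e, e)).
  { intros [g h]; split.
    - intros [[Hg Hgh] Hr]; simpl in *.
      exists g; split; auto.
      assert (Ha : CE mul E (g, g)) by (split; simpl; auto; apply HEid; auto).
      specialize (Hr (g, g) Ha (HEid g Hg)).
      unfold CE_comp in Hr; simpl in Hr. injection Hr; intros.
      congruence.
    - intros [e [He Heq]]; inversion Heq; subst.
      split. { split; simpl; auto; apply HEid; auto. }
      intros [a u] _ Hd; unfold CE_defined, CE_comp in *; simpl in *.
      rewrite Hd; reflexivity. }
  split; [exact WD|].
  split.
  { split; [| split; [| split; [| split]]].
    - intros [e s] [f t] Hx Hy Hd; eapply WD; eauto.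
    - intros [e s] [He _]; split; simpl; auto; apply HEid; auto.
    - intros [e s] [f t] [g u] Hx Hy Hz Hyz Hxyz;
        unfold CE_defined, CE_comp in *; simpl in *.
      split; auto. split.
      + rewrite <- Hassoc, Hyz; reflexivity.
      + rewrite Hassoc; reflexivity.
    - intros [e s] [f t] [g u] _ _ _ H1 H2; unfold CE_defined, CE_comp in *; simpl in *; auto.
    - intros [e s] [He Hes]; simpl in *.
      split. { apply RI; exists e; auto. }
      unfold CE_defined, CE_comp, CE_D; simpl.
      split. { apply HEid; auto. }
      split. { rewrite Hes; reflexivity. }
      intros [g h] Hr Hd Hc.
      apply RI in Hr. destruct Hr as [g' [Hg' Heq]]; inversion Heq; subst.
      simpl in *. injection Hc; intros; subst; reflexivity. }
  split; [exact RI|].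
  split.
  { intros p; split.
    - intros [[e s] [[He _] Hq]]; exists e; split; auto; rewrite <- Hq; reflexivity.
    - intros [e [He Hq]]; exists (e, e); split.
      + split; simpl; auto; apply HEid; auto.
      + rewrite Hq; reflexivity. }
  split.
  { intros e s f t _ _; unfold nat_le, CE_defined, CE_comp, CE_D; simpl; split.
    - intros [H1 H2]; injection H2; intros; auto.
    - intros [H1 H2]; split; auto; rewrite H2; reflexivity. }
  intros d [Hdm [HdE Hde]].
  split; [| split].
  - intros s [H _]; exact H.
  - intros [e s] [[He _] _]; split; simpl; auto; split; simpl; auto; apply HEid; auto.
  - intros [e s] [f t] [Hx Hdx] [Hy Hdy] Hd; unfold CE_defined, CE_comp in *; simpl in *.
    split. { eapply WD; eauto. }
    simpl. destruct (Hdm s t) as [_ [_ H1]].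
    destruct (Hdm s f) as [_ [_ H2]].
    rewrite H1, <- Hdy, <- H2, Hd; exact Hdx.
Qed.
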